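(* Let $\mathcal H$ be an infinite-dimensional complex Hilbert space and let $\mathcal B_f(\mathcal H)$ be the set of bounded forms in $\mathcal V_f(\mathcal H)$. Then $(\mathcal B_f(\mathcal H);\oplus_{|\mathcal B_f(\mathcal H)},o)$ is a sub-generalized effect algebra of the generalized effect algebra $(\mathcal V_f(\mathcal H);\oplus,o)$.
   Context: Bilinear forms $t$ on $\mathcal H$ are sesquilinear maps $D(t)\times D(t)\to\mathbb C$ on a dense linear subspace $D(t)$ (linear in the first argument); $t$ is positive if $t(x,x)\ge0$ on $D(t)$, bounded if $\sup\{t(x,x)\mid x\in D(t),\|x\|=1\}<\infty$. The sum $t+s$ has domain $D(t)\cap D(s)$. $o$ is the zero form on $\mathcal H$. $\mathcal V_f(\mathcal H)$ is the set of positive bilinear forms $t$ with dense domain such that $D(t)=\mathcal H$ whenever $t$ is bounded; $t\oplus s$ is defined iff $t$ or $s$ is bounded or $D(t)=D(s)$, and then $t\oplus s=t+s$; this makes $(\mathcal V_f(\mathcal H);\oplus,o)$ a generalized effect algebra (partial commutative, associative operation with neutral element $0$, cancellation, and $x\oplus y=0\Rightarrow x=y=0$). A subset $Q$ of a generalized effect algebra $E$ is a sub-generalized effect algebra if $0\in Q$ and whenever $x\oplus y=z$ in $E$ with at least two of $x,y,z$ in $Q$, then all of $x,y,z$ lie in $Q$. For $Q\subseteq E$, $x\oplus_{|Q}y$ is defined iff $x\oplus y$ is defined in $E$ and lies in $Q$, and then equals $x\oplus y$. *)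

(* Defs.v *)
From HB Require Import structures.
From mathcomp Require Import all_boot all_order all_algebra.
From mathcomp Require Import boolp classical_sets reals.
From mathcomp Require Import complex.
Set Implicit Arguments. Unset Strict Implicit. Unset Printing Implicit Defensive.
Import Order.TTheory GRing.Theory Num.Theory.
Local Open Scope ring_scope.
Local Open Scope classical_set_scope.

Section Hilbert.
Variable R : realType.
Local Notation C := R[i].
Variable V : lmodType C.
Variable ip : V -> V -> C.

Definition ipnorm (x : V) : R := Num.sqrt (complex.Re (ip x x)).

Definition is_cauchy (u : nat -> V) : Prop :=
  forall e : R, 0 < e -> exists N, forall m n, (N <= m)%N -> (N <= n)%N ->
    ipnorm (u m - u n) < e.
Definition converges_to (u : nat -> V) (l : V) : Prop :=
  forall e : R, 0 < e -> exists N, forall n, (N <= n)%N -> ipnorm (u n - l) < e.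

Definition is_hilbert : Prop :=
  [/\ (forall (a : C) (x y z : V), ip (a *: x + y) z = a * ip x z + ip y z),
      (forall x y : V, ip y x = (ip x y)^*),
      (forall x : V, 0 <= ip x x),
      (forall x : V, ip x x = 0 -> x = 0)
    & (forall u, is_cauchy u -> exists l, converges_to u l)].

Definition infinite_dim : Prop :=
  forall k : nat, exists v : 'I_k -> V,
    forall a : 'I_k -> C, \sum_(j < k) a j *: v j = 0 -> forall j, a j = 0.

Definition dense_subspace (D : set V) : Prop :=
  [/\ D 0,
      (forall (a : C) x y, D x -> D y -> D (a *: x + y))
    & (forall x (e : R), 0 < e -> exists2 y, D y & ipnorm (x - y) < e)].

(* A bilinear form: a domain and a value; values outside D x D are
   normalized to 0 so that Leibniz equality of forms is form equality. *)
Record form := Form { fdom : set V; fval : V -> V -> C }.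

Definition is_form (t : form) : Prop :=
  [/\ dense_subspace (fdom t),
      (forall (a : C) x y z, fdom t x -> fdom t y -> fdom t z ->
          fval t (a *: x + y) z = a * fval t x z + fval t y z),
      (forall (a : C) x y z, fdom t x -> fdom t y -> fdom t z ->
          fval t z (a *: x + y) = a^* * fval t z x + fval t z y)
    & (forall x y, ~ (fdom t x /\ fdom t y) -> fval t x y = 0)].

Definition positive_form (t : form) : Prop :=
  forall x, fdom t x -> 0 <= fval t x x.

Definition bounded_form (t : form) : Prop :=
  exists M : R, forall x, fdom t x -> ipnorm x = 1 -> fval t x x <= (M%:C)%C.

Definition oform : form := Form setT (fun _ _ => 0).

Definition fsum (t s : form) : form :=
  Form (fdom t `&` fdom s)
    (fun x y => if `[< (fdom t `&` fdom s) x /\ (fdom t `&` fdom s) y >]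
                then fval t x y + fval s x y else 0).

Definition Vf : set form :=
  [set t | is_form t /\ positive_form t /\ (bounded_form t -> fdom t = setT)].

Definition Bf : set form := [set t | Vf t /\ bounded_form t].

Definition oplus_defined (t s : form) : Prop :=
  bounded_form t \/ bounded_form s \/ fdom t = fdom s.
Definition oplus (t s : form) : form := fsum t s.

End Hilbert.

Definition sub_gea (T : Type) (E : set T) (defd : T -> T -> Prop)
    (op : T -> T -> T) (zero : T) (Q : set T) : Prop :=
  [/\ Q `<=` E, Q zero &
      forall x y z, E x -> E y -> E z -> defd x y -> op x y = z ->
        (Q x /\ Q y) \/ (Q x /\ Q z) \/ (Q y /\ Q z) -> [/\ Q x, Q y & Q z]].

(* Main.v *)
Require Import Defs.
From HB Require Import structures.
From mathcomp Require Import all_boot all_order all_algebra.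
From mathcomp Require Import boolp classical_sets reals.
From mathcomp Require Import complex.
Import Order.TTheory GRing.Theory Num.Theory.
Local Open Scope ring_scope.
Local Open Scope classical_set_scope.
Lemma ip0 (R : realType) (V : lmodType R[i]) (ip : V -> V -> R[i]) :
  is_hilbert ip -> ip 0 0 = 0.
Proof.
case=> lin _ _ _ _.
have := lin 1 0 0 0; rewrite scale1r addr0 mul1r.
by rewrite -{1}(addr0 (ip 0 0)) => /addrI ->.
Qed.
Lemma oformB (R : realType) (V : lmodType R[i]) (ip : V -> V -> R[i])
  (HH : is_hilbert ip) : Bf ip (oform V).
Proof.
  split; last by exists 0 => x _ _ /=; rewrite le_eqVlt eqxx.
  split; last first.
    split; first by move=> x _ /=; rewrite le_eqVlt eqxx.
    by [].
  split => //=.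
  + split => //.
    move=> x e e0; exists x => //.
    by rewrite /ipnorm subrr ip0 // (_ : complex.Re 0 = 0) // sqrtr0.
  + by move=> a x y z _ _ _; rewrite mulr0 addr0.
  + by move=> a x y z _ _ _; rewrite mulr0 addr0.
Qed.
Lemma fsum_diag (R : realType) (V : lmodType R[i]) (t s : Defs.form V) v :
  fdom t v -> fdom s v -> fval (fsum t s) v v = fval t v v + fval s v v.
Proof.
move=> ht hs /=; rewrite asboolT //; split; split => //.
Qed.

Lemma case2 (R : realType) (V : lmodType R[i]) (ip : V -> V -> R[i]) x y :
  Vf ip x -> Vf ip y -> Vf ip (oplus x y) -> Bf ip x -> Bf ip (oplus x y) -> Bf ip y.
Proof.
move=> Vx Vy Vz [_ [Mx hx]] [_ [Mz hz]].
  case: (Vx) => [[_ _ _ _] [px bx]].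
  case: (Vy) => [[_ _ _ _] [py by_]].
  have dx : fdom x = setT by apply: bx; exists Mx.
    have dz : fdom (oplus x y) = setT by case: (Vz) => _ [_]; apply; exists Mz.
    have dy : fdom y = setT.
      by move: dz; rewrite /= dx setTI.
    split => //.
    exists Mz => v _ nv.
    have := hz v; rewrite dz => /(_ I nv).
    have ex : fdom x v by rewrite dx.
    have ey : fdom y v by rewrite dy.
    rewrite /oplus (@fsum_diag _ _ x y v ex ey) => h.
    have h2 : fval y v v <= fval x v v + fval y v v.
      by rewrite lerDr; exact: px.
    exact: (le_trans h2 h).
Qed.

Lemma case3 (R : realType) (V : lmodType R[i]) (ip : V -> V -> R[i]) x y :
  Vf ip x -> Vf ip y -> Vf ip (oplus x y) -> Bf ip y -> Bf ip (oplus x y) -> Bf ip x.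
Proof.
move=> Vx Vy Vz [_ [My hy]] [_ [Mz hz]].
  case: (Vx) => [[_ _ _ _] [px bx]].
  case: (Vy) => [[_ _ _ _] [py by_]].
  have dy : fdom y = setT by apply: by_; exists My.
    have dz : fdom (oplus x y) = setT by case: (Vz) => _ [_]; apply; exists Mz.
    have dx : fdom x = setT.
      by move: dz; rewrite /= dy setIT.
    split => //.
    exists Mz => v _ nv.
    have := hz v; rewrite dz => /(_ I nv).
    have ex : fdom x v by rewrite dx.
    have ey : fdom y v by rewrite dy.
    rewrite /oplus (@fsum_diag _ _ x y v ex ey) => h.
    have h2 : fval x v v <= fval x v v + fval y v v.
      by rewrite lerDl; exact: py.
    exact: (le_trans h2 h).
Qed.

Lemma case1 (R : realType) (V : lmodType R[i]) (ip : V -> V -> R[i]) x y :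
  Vf ip (oplus x y) -> Bf ip x -> Bf ip y -> Bf ip (oplus x y).
Proof.
move=> Vz [_ [Mx hx]] [_ [My hy]].
split => //; exists (Mx + My) => v [dx dy] nv.
rewrite (@fsum_diag _ _ x y v dx dy) rmorphD /=; apply: lerD; [exact: hx|exact: hy].
Qed.
Lemma t4 (R : realType) (V : lmodType R[i]) (ip : V -> V -> R[i]) x y z :
 Vf ip x -> Vf ip y -> Vf ip z -> oplus x y = z ->
        (Bf ip x /\ Bf ip y) \/ (Bf ip x /\ Bf ip z) \/ (Bf ip y /\ Bf ip z) -> [/\ Bf ip x, Bf ip y & Bf ip z].
Proof.
move=> Vx Vy Vz E H; subst z.
  case: H => [[Bx By]|[[Bx Bz]|[By Bz]]].
  + split => //. exact: (@case1 _ _ _ _ _ Vz Bx By).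
  + split => //. exact: (@case2 _ _ _ _ _ Vx Vy Vz Bx Bz).
  + split => //. exact: (@case3 _ _ _ _ _ Vx Vy Vz By Bz).
Qed.

Theorem theorem4p12 (R : realType) (V : lmodType R[i]) (ip : V -> V -> R[i])
  (HH : is_hilbert ip) (Hinf : infinite_dim V) :
  sub_gea (Vf ip) (@oplus_defined R V ip) (@oplus R V) (oform V) (Bf ip).
Proof.
split.
- by move=> t [].
- exact: oformB.
- move=> x y z Vx Vy Vz _ E H; exact: (@t4 _ _ _ _ _ _ Vx Vy Vz E H).
Qed.
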